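(* For $d\in[6.74,7.5]$ let $x(3,d)$ be the unique solution of $\Psi_d(x)=x$ in $[\frac38,\frac12]$ and set $\Phi^\star(d)=\Phi_3(d,x(3,d))$. Then $d\mapsto\Phi^\star(d)$ is continuous on $[6.74,7.5]$, $\Phi^\star(6.74)>0$ and $\Phi^\star(7.5)<0$.
   Context: $\hat\Psi(x)=\frac{1-2x^{2}}{1-x^{2}}$, $\dot\Psi(v)=\frac{1-v^{d-1}}{2-v^{d-1}}$, $\Psi_d=\dot\Psi\circ\hat\Psi$; $\Phi_3(d,x)=-\log(1-x)-d(\frac23-d^{-1})\log(1-2x^3)+(d-1)\log(1-x^{2})$. (Existence and uniqueness of $x(3,d)$ for these $d$ is known.) *)

(* Defs.v *)
From Stdlib Require Import Reals ClassicalEpsilon.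
From Coquelicot Require Import Coquelicot.
Open Scope R_scope.

Definition Psi_hat (x : R) : R := (1 - 2 * x ^ 2) / (1 - x ^ 2).

Definition Psi_dot (d v : R) : R :=
  (1 - Rpower v (d - 1)) / (2 - Rpower v (d - 1)).

Definition Psi (d x : R) : R := Psi_dot d (Psi_hat x).

Definition Phi3 (d x : R) : R :=
  - ln (1 - x) - d * (2 / 3 - / d) * ln (1 - 2 * x ^ 3)
  + (d - 1) * ln (1 - x ^ 2).

(* x(3,d): the (unique) solution of Psi_d(x) = x in [3/8, 1/2],
   chosen by Hilbert's epsilon (unspecified if none exists). *)
Definition xfix (d : R) : R :=
  epsilon (inhabits 0) (fun x => 3 / 8 <= x <= 1 / 2 /\ Psi d x = x).

Definition Phi_star (d : R) : R := Phi3 d (xfix d).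

(* Main.v *)
Require Import Defs. From Stdlib Require Import ClassicalEpsilon.
From Stdlib Require Import Reals Lra Psatz.
From Coquelicot Require Import Coquelicot.
Open Scope R_scope.

Definition Sz (z : R) : R := 2 * (z + z^3/3 + z^5/5 + z^7/7 + z^9/9 + z^11/11 + z^13/13 + z^15/15 + z^17/17).
Definition Tz (z : R) : R := ln (1 + z) - ln (1 - z).

Lemma T_pos (z : R) : 0 < z <= 1/2 -> Sz z <= Tz z <= Sz z + 4/3 * z^18.
Proof.
  intros Hz.
  set (f := fun t => Tz t - Sz t).
  set (f' := fun t => 2 * t^18 / (1 - t^2)).
  destruct (MVT_cor2 f f' 0 z) as [c [Hc1 Hc2]]; [lra| |].
  - intros c Hc. apply is_derive_Reals. unfold f, f', Tz, Sz.
    auto_derive.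
    + repeat split; lra.
    + field. repeat split; nra.
  - assert (Hf0 : f 0 = 0).
    { unfold f, Tz, Sz. rewrite Rplus_0_r, Rminus_0_r, ln_1. field. }
    rewrite Hf0 in Hc1. unfold f, f' in Hc1.
    assert (Hc18 : 0 <= c^18 <= z^18).
    { split. apply pow_le; lra. apply pow_incr; lra. }
    assert (H1 : 0 <= 2 * c^18 / (1 - c^2) * (z - 0)).
    { apply Rmult_le_pos; [|lra]. apply Rmult_le_pos; [lra|]. left; apply Rinv_0_lt_compat; nra. }
    assert (H2 : 2 * c^18 / (1 - c^2) * (z - 0) <= 4/3 * z^18).
    { assert (Hd : / (1 - c^2) <= 4/3).
      { rewrite <- (Rinv_inv (4/3)). apply Rinv_le_contravar; nra. }
      unfold Rdiv.
      assert (0 <= / (1 - c^2)) by (left; apply Rinv_0_lt_compat; nra).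
      set (i := / (1 - c^2)) in *.
      replace (2 * c ^ 18 * i * (z - 0)) with (2 * (c^18 * (i * z))) by ring.
      assert (c^18 * (i * z) <= z^18 * (4/3 * (1/2))).
      { apply Rmult_le_compat; try lra. apply Rmult_le_pos; lra.
        apply Rmult_le_compat; lra. }
      lra. }
    lra.
Qed.

Lemma Sz_odd z : Sz (-z) = - Sz z.
Proof. unfold Sz. field. Qed.

Lemma T_bounds (z : R) : -1/2 <= z <= 1/2 -> Sz z - 4/3 * z^18 <= Tz z <= Sz z + 4/3 * z^18.
Proof.
  intros Hz. destruct (Rtotal_order z 0) as [Hn|[H0|Hp]].
  - assert (H := T_pos (-z)). 
    assert (E : Tz (-z) = - Tz z).
    { unfold Tz. replace (1 + - z) with (1 - z) by ring. replace (1 - - z) with (1+z) by ring. ring. }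
    rewrite E, Sz_odd in H. replace ((-z)^18) with (z^18) in H by ring. lra.
  - subst. unfold Tz, Sz. rewrite Rplus_0_r, Rminus_0_r, ln_1. lra.
  - assert (H := T_pos z). lra.
Qed.

Definition l2lo := 693147177 / 1000000000.
Definition l2hi := 693147184 / 1000000000.

Lemma ln2_b : l2lo <= ln 2 <= l2hi.
Proof.
  assert (H := T_bounds (1/3)). 
  assert (E : Tz (1/3) = ln 2).
  { unfold Tz. rewrite <- ln_div by lra. f_equal. field. }
  rewrite E in H. unfold Sz in H. unfold l2lo, l2hi. lra.
Qed.

Lemma le_div_r a b c : 0 < c -> a * c <= b -> a <= b / c.
Proof. intros Hc H. apply Rmult_le_reg_r with c; auto. unfold Rdiv. rewrite Rmult_assoc, Rinv_l; lra. Qed.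
Lemma le_div_l a b c : 0 < c -> b <= a * c -> b / c <= a.
Proof. intros Hc H. apply Rmult_le_reg_r with c; auto. unfold Rdiv. rewrite Rmult_assoc, Rinv_l; lra. Qed.

Lemma ln_scale y s : 0 < y -> ln (y * 2^s) = ln y + INR s * ln 2.
Proof. intros Hy. rewrite ln_mult, ln_pow; try lra. apply pow_lt; lra. Qed.

Lemma Tz_ln z : -1/2 <= z <= 1/2 -> ln ((1+z)/(1-z)) = Tz z.
Proof. intros. unfold Tz. rewrite ln_div; lra. Qed.

Lemma ln_ub_p (y z ub : R) (s : nat) : 0 < y -> -1/2 <= z <= 1/2 ->
  y * 2^s * (1 - z) <= 1 + z -> Sz z + 4/3 * z^18 - INR s * l2lo <= ub -> ln y <= ub.
Proof.
  intros Hy Hz H1 H2. assert (H := T_bounds z Hz). assert (L := ln2_b).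
  assert (ln (y * 2^s) <= ln ((1+z)/(1-z))).
  { apply ln_le. apply Rmult_lt_0_compat; [lra| apply pow_lt; lra].
    apply le_div_r; lra. }
  rewrite ln_scale, Tz_ln in H0; auto. assert (0 <= INR s) by apply pos_INR. nra.
Qed.

Lemma ln_ub_n (y z ub : R) (s : nat) : 0 < y -> -1/2 <= z <= 1/2 ->
  y * (1 - z) <= 2^s * (1 + z) -> Sz z + 4/3 * z^18 + INR s * l2hi <= ub -> ln y <= ub.
Proof.
  intros Hy Hz H1 H2. assert (H := T_bounds z Hz). assert (L := ln2_b).
  assert (ln y <= ln ((1+z)/(1-z) * 2^s)).
  { apply ln_le. auto.
    replace ((1 + z) / (1 - z) * 2 ^ s) with (2^s * (1+z) / (1 - z)) by (field; lra).
    apply le_div_r; lra. }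
  rewrite ln_scale, Tz_ln in H0; auto. assert (0 <= INR s) by apply pos_INR. nra.
  apply Rdiv_lt_0_compat; lra.
Qed.

Lemma ln_lb_p (y z lb : R) (s : nat) : 0 < y -> -1/2 <= z <= 1/2 ->
  1 + z <= y * 2^s * (1 - z) -> lb <= Sz z - 4/3 * z^18 - INR s * l2hi -> lb <= ln y.
Proof.
  intros Hy Hz H1 H2. assert (H := T_bounds z Hz). assert (L := ln2_b).
  assert (ln ((1+z)/(1-z)) <= ln (y * 2^s)).
  { apply ln_le. apply Rdiv_lt_0_compat; lra.
    apply le_div_l; lra. }
  rewrite ln_scale, Tz_ln in H0; auto. assert (0 <= INR s) by apply pos_INR. nra.
Qed.

Lemma ln_lb_n (y z lb : R) (s : nat) : 0 < y -> -1/2 <= z <= 1/2 ->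
  2^s * (1 + z) <= y * (1 - z) -> lb <= Sz z - 4/3 * z^18 + INR s * l2lo -> lb <= ln y.
Proof.
  intros Hy Hz H1 H2. assert (H := T_bounds z Hz). assert (L := ln2_b).
  assert (ln ((1+z)/(1-z) * 2^s) <= ln y).
  { apply ln_le. apply Rmult_lt_0_compat; [apply Rdiv_lt_0_compat; lra| apply pow_lt; lra].
    replace ((1 + z) / (1 - z) * 2 ^ s) with (2^s * (1+z) / (1 - z)) by (field; lra).
    apply le_div_l; lra. }
  rewrite ln_scale, Tz_ln in H0; auto. assert (0 <= INR s) by apply pos_INR. nra.
  apply Rdiv_lt_0_compat; lra.
Qed.

Definition Lf (t : R) : R := ln ((1 - t) / (1 - 2 * t)).
Lemma pc0_ub : Lf ((389/1000)) <= (101241958419/100000000000).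
Proof. unfold Lf. apply (ln_ub_n _ (-92394929953/500000000000) _ 2); [nra | lra | simpl; nra | unfold Sz, l2lo, l2hi; simpl INR; lra]. Qed.

Lemma pc0_lb : (8934589437/50000000000) <= Lf ((3/8)^2).
Proof. unfold Lf. apply (ln_lb_n _ (89108910891/1000000000000) _ 0); [nra | lra | simpl; nra | unfold Sz, l2lo, l2hi; simpl INR; lra]. Qed.

Lemma pc1_ub : Lf ((201/500)) <= (111547610161/100000000000).
Proof. unfold Lf. apply (ln_ub_n _ (-134587554269/1000000000000) _ 2); [nra | lra | simpl; nra | unfold Sz, l2lo, l2hi; simpl INR; lra]. Qed.

Lemma pc1_lb : (981910571/5000000000) <= Lf ((389/1000)^2).
Proof. unfold Lf. apply (ln_lb_n _ (48938350117/500000000000) _ 0); [nra | lra | simpl; nra | unfold Sz, l2lo, l2hi; simpl INR; lra]. Qed.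

Lemma pc2_ub : Lf ((413/1000)) <= (486387811/400000000).
Proof. unfold Lf. apply (ln_ub_n _ (-42478565861/500000000000) _ 2); [nra | lra | simpl; nra | unfold Sz, l2lo, l2hi; simpl INR; lra]. Qed.

Lemma pc2_lb : (21412655467/100000000000) <= Lf ((201/500)^2).
Proof. unfold Lf. apply (ln_lb_n _ (106656071721/1000000000000) _ 0); [nra | lra | simpl; nra | unfold Sz, l2lo, l2hi; simpl INR; lra]. Qed.

Lemma pc3_ub : Lf ((21/50)) <= (128785429519/100000000000).
Proof. unfold Lf. apply (ln_ub_n _ (-12295081967/250000000000) _ 2); [nra | lra | simpl; nra | unfold Sz, l2lo, l2hi; simpl INR; lra]. Qed.

Lemma pc3_lb : (11511290957/50000000000) <= Lf ((413/1000)^2).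
Proof. unfold Lf. apply (ln_lb_n _ (114607137169/1000000000000) _ 0); [nra | lra | simpl; nra | unfold Sz, l2lo, l2hi; simpl INR; lra]. Qed.

Lemma e49_lb : (80966960859/25000000000) <= Lf ((49/100)).
Proof. unfold Lf. apply (ln_lb_n _ (-113043478261/1000000000000) _ 5); [nra | lra | simpl; nra | unfold Sz, l2lo, l2hi; simpl INR; lra]. Qed.

Lemma e49_ub : Lf ((49/100)^2) <= (37974272691/100000000000).
Proof. unfold Lf. apply (ln_ub_n _ (-77716032231/500000000000) _ 1); [nra | lra | simpl; nra | unfold Sz, l2lo, l2hi; simpl INR; lra]. Qed.

Lemma al_ub : Lf ((446539/1000000)) <= (82204584959/50000000000).
Proof. unfold Lf. apply (ln_ub_n _ (12818950027/100000000000) _ 2); [nra | lra | simpl; nra | unfold Sz, l2lo, l2hi; simpl INR; lra]. Qed.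

Lemma al2_lb : (286427719/1000000000) <= Lf ((446539/1000000)^2).
Proof. unfold Lf. apply (ln_lb_n _ (4445084709/31250000000) _ 0); [nra | lra | simpl; nra | unfold Sz, l2lo, l2hi; simpl INR; lra]. Qed.

Lemma ar_lb : (1315286867/800000000) <= Lf ((22327/50000)).
Proof. unfold Lf. apply (ln_lb_n _ (128197810709/1000000000000) _ 2); [nra | lra | simpl; nra | unfold Sz, l2lo, l2hi; simpl INR; lra]. Qed.

Lemma ar2_ub : Lf ((22327/50000)^2) <= (28642957447/100000000000).
Proof. unfold Lf. apply (ln_ub_n _ (71121809823/500000000000) _ 0); [nra | lra | simpl; nra | unfold Sz, l2lo, l2hi; simpl INR; lra]. Qed.

Lemma pa1 : ln (1 - (446539/1000000)) <= (-11831279729/20000000000).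
Proof. apply (ln_ub_p _ (50747963143/1000000000000) _ 1); [nra | lra | simpl; nra | unfold Sz, l2lo, l2hi; simpl INR; lra]. Qed.

Lemma pa2 : ln (1 - 2 * (446539/1000000)^3) <= (-9805436879/50000000000).
Proof. apply (ln_ub_p _ (-9774131957/100000000000) _ 0); [nra | lra | simpl; nra | unfold Sz, l2lo, l2hi; simpl INR; lra]. Qed.

Lemma pa3 : (-22239129883/100000000000) <= ln (1 - (22327/50000)^2).
Proof. apply (ln_lb_p _ (-55369806447/500000000000) _ 0); [nra | lra | simpl; nra | unfold Sz, l2lo, l2hi; simpl INR; lra]. Qed.

Lemma bl_ub : Lf ((4693/10000)) <= (215678706501/100000000000).
Proof. unfold Lf. apply (ln_ub_n _ (193267443/5000000000) _ 3); [nra | lra | simpl; nra | unfold Sz, l2lo, l2hi; simpl INR; lra]. Qed.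

Lemma bl2_lb : (16595630519/50000000000) <= Lf ((4693/10000)^2).
Proof. unfold Lf. apply (ln_lb_n _ (-89339254937/500000000000) _ 1); [nra | lra | simpl; nra | unfold Sz, l2lo, l2hi; simpl INR; lra]. Qed.

Lemma br_lb : (4319722483/2000000000) <= Lf ((2347/5000)).
Proof. unfold Lf. apply (ln_lb_n _ (5023524799/125000000000) _ 3); [nra | lra | simpl; nra | unfold Sz, l2lo, l2hi; simpl INR; lra]. Qed.

Lemma br2_ub : Lf ((2347/5000)^2) <= (16606391173/50000000000).
Proof. unfold Lf. apply (ln_ub_n _ (-178574340171/1000000000000) _ 1); [nra | lra | simpl; nra | unfold Sz, l2lo, l2hi; simpl INR; lra]. Qed.

Lemma pb1 : (-7921835509/12500000000) <= ln (1 - (2347/5000)).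
Proof. apply (ln_lb_p _ (14845720939/500000000000) _ 1); [nra | lra | simpl; nra | unfold Sz, l2lo, l2hi; simpl INR; lra]. Qed.

Lemma pb2 : (-362101809/1562500000) <= ln (1 - 2 * (2347/5000)^3).
Proof. apply (ln_lb_p _ (-115356762959/1000000000000) _ 0); [nra | lra | simpl; nra | unfold Sz, l2lo, l2hi; simpl INR; lra]. Qed.

Lemma pb3 : ln (1 - (4693/10000)^2) <= (-3109653653/12500000000).
Proof. apply (ln_ub_p _ (-123748594267/1000000000000) _ 0); [nra | lra | simpl; nra | unfold Sz, l2lo, l2hi; simpl INR; lra]. Qed.

Definition Gk (k x : R) : R := Lf x - k * Lf (x^2).

Lemma ratio_pos t : t < 1/2 -> 0 < (1 - t) / (1 - 2 * t).
Proof. intros; apply Rdiv_lt_0_compat; lra. Qed.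



Lemma Lf_mono s t : 0 <= s <= t -> t < 1/2 -> Lf s <= Lf t.
Proof.
  intros H1 H2. unfold Lf. apply ln_le. apply ratio_pos; lra.
  assert ((1 - t) / (1 - 2 * t) - (1 - s) / (1 - 2 * s) = (t - s) / ((1 - 2*t) * (1 - 2*s))) by (field; lra).
  assert (0 <= (t - s) / ((1 - 2*t) * (1 - 2*s))).
  { apply Rmult_le_pos; [lra|]. left; apply Rinv_0_lt_compat. apply Rmult_lt_0_compat; lra. }
  lra.
Qed.

Lemma Lf_pos t : 0 < t < 1/2 -> 0 < Lf t.
Proof.
  intros H. unfold Lf. rewrite <- ln_1. apply ln_increasing; [lra|].
  assert ((1 - t) / (1 - 2 * t) - 1 = t / (1 - 2 * t)) by (field; lra).
  assert (0 < t / (1 - 2 * t)) by (apply Rdiv_lt_0_compat; lra).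
  lra.
Qed.

Lemma Lf_ge0 t : 0 <= t < 1/2 -> 0 <= Lf t.
Proof.
  intros H. destruct (Req_dec t 0) as [->|Hn].
  - unfold Lf. replace ((1 - 0) / (1 - 2 * 0)) with 1 by field. rewrite ln_1; lra.
  - left; apply Lf_pos; lra.
Qed.

Lemma piece k x a b : 574/100 <= k -> 0 <= a <= x -> x <= b -> b < 1/2 ->
  Lf b < 574/100 * Lf (a^2) -> Gk k x < 0.
Proof.
  intros Hk Ha Hb Hb2 H. unfold Gk.
  assert (H1 : Lf x <= Lf b) by (apply Lf_mono; lra).
  assert (H2 : Lf (a^2) <= Lf (x^2)) by (apply Lf_mono; nra).
  assert (H3 : 0 <= Lf (a^2)) by (apply Lf_ge0; nra).
  assert (H4 : 574/100 * Lf (a^2) <= k * Lf (x^2)).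
  { apply Rmult_le_compat; lra. }
  lra.
Qed.

Lemma G_neg_low k x : 574/100 <= k -> 3/8 <= x <= 21/50 -> Gk k x < 0.
Proof.
  intros Hk Hx.
  destruct (Rle_lt_dec x (389/1000)).
  { apply (piece k x (3/8) (389/1000)); try lra. assert (H1 := pc0_ub). assert (H2 := pc0_lb). lra. }
  destruct (Rle_lt_dec x (201/500)).
  { apply (piece k x (389/1000) (201/500)); try lra. assert (H1 := pc1_ub). assert (H2 := pc1_lb). lra. }
  destruct (Rle_lt_dec x (413/1000)).
  { apply (piece k x (201/500) (413/1000)); try lra. assert (H1 := pc2_ub). assert (H2 := pc2_lb). lra. }
  { apply (piece k x (413/1000) (21/50)); try lra. assert (H1 := pc3_ub). assert (H2 := pc3_lb). lra. }
Qed.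

Lemma G_deriv k c : 0 < c < 1/2 ->
  derivable_pt_lim (Gk k) c (((1 + c) * (1 - 2 * c^2) - 2 * k * c * (1 - 2 * c)) /
                             ((1 - c^2) * (1 - 2 * c) * (1 - 2 * c^2))).
Proof.
  intros Hc. apply is_derive_Reals. unfold Gk, Lf.
  auto_derive.
  - repeat split; try (intro; nra); try (apply Rdiv_lt_0_compat; nra).
  - field. repeat split; nra.
Qed.

Lemma G_incr k x y : 0 <= k <= 13/2 -> 21/50 <= x -> x < y -> y < 1/2 -> Gk k x < Gk k y.
Proof.
  intros Hk Hx Hxy Hy.
  destruct (MVT_cor2 (Gk k) (fun c => ((1 + c) * (1 - 2 * c^2) - 2 * k * c * (1 - 2 * c)) /
                             ((1 - c^2) * (1 - 2 * c) * (1 - 2 * c^2))) x y Hxy) as [c [Hc1 Hc2]].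
  { intros c Hc. apply G_deriv; lra. }
  assert (Hp : 0 < ((1 + c) * (1 - 2 * c^2) - 2 * k * c * (1 - 2 * c)) /
                   ((1 - c^2) * (1 - 2 * c) * (1 - 2 * c^2))).
  { apply Rdiv_lt_0_compat.
    - assert (2 * k * c * (1 - 2 * c) <= 13 * c * (1 - 2 * c)).
      { assert (0 <= c * (1 - 2 * c)) by nra. nra. }
      assert (0 < (1 + c) * (1 - 2 * c^2) - 13 * c * (1 - 2 * c)).
      { set (e := c - 21/50). replace c with (21/50 + e) by (unfold e; ring).
        assert (0 <= e <= 8/100) by (unfold e; lra). nra. }
      lra.
    - repeat apply Rmult_lt_0_compat; nra. }
  assert (0 < y - x) by lra.
  assert (0 < Gk k y - Gk k x). { rewrite Hc1. apply Rmult_lt_0_compat; auto. }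
  lra.
Qed.

Lemma G_cont k x : 0 < x < 1/2 -> continuity_pt (Gk k) x.
Proof.
  intros Hx. apply derivable_continuous_pt. eexists. apply G_deriv; auto.
Qed.

Lemma G_pos49 k : 0 <= k <= 13/2 -> 0 < Gk k (49/100).
Proof.
  intros Hk. unfold Gk. assert (H1 := e49_lb). assert (H2 := e49_ub).
  assert (H3 : 0 <= Lf ((49/100)^2)) by (apply Lf_ge0; nra).
  assert (k * Lf ((49/100)^2) <= 13/2 * Lf ((49/100)^2)) by (apply Rmult_le_compat_r; lra).
  lra.
Qed.

Lemma G_root_exists k : 574/100 <= k <= 13/2 -> exists x, 21/50 < x < 49/100 /\ Gk k x = 0.
Proof.
  intros Hk.
  destruct (Ranalysis5.IVT_interv (Gk k) (21/50) (49/100)) as [x [Hx1 Hx2]].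
  - intros a Ha. apply G_cont; lra.
  - lra.
  - apply G_neg_low; lra.
  - apply G_pos49; lra.
  - exists x. split; auto. split.
    + destruct (Req_dec x (21/50)) as [E|E]; [|lra].
      subst. assert (Gk k (21/50) < 0) by (apply G_neg_low; lra). lra.
    + destruct (Req_dec x (49/100)) as [E|E]; [|lra].
      subst. assert (0 < Gk k (49/100)) by (apply G_pos49; lra). lra.
Qed.

Lemma root_between k x a b : 574/100 <= k <= 13/2 -> 21/50 <= a -> a < b -> b < 1/2 ->
  3/8 <= x < 1/2 -> Gk k x = 0 -> Gk k a < 0 -> 0 < Gk k b -> a < x < b.
Proof.
  intros Hk Ha Hab Hb Hx H0 Hga Hgb. split.
  - destruct (Rlt_or_le a x) as [|Hxa]; auto. exfalso.
    destruct (Rle_lt_dec x (21/50)).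
    + assert (Gk k x < 0) by (apply G_neg_low; lra). lra.
    + destruct (Req_dec x a) as [->|Hne]; [lra|].
      assert (Gk k x < Gk k a) by (apply G_incr; lra). lra.
  - destruct (Rlt_or_le x b) as [|Hxb]; auto. exfalso.
    destruct (Req_dec x b) as [->|Hne]; [lra|].
    assert (Gk k b < Gk k x) by (apply G_incr; lra). lra.
Qed.

Lemma lnPsihat x : 0 <= x <= 1/2 -> ln (Psi_hat x) = - Lf (x^2).
Proof.
  intros Hx. unfold Psi_hat, Lf.
  replace ((1 - 2 * x ^ 2) / (1 - x ^ 2)) with (/ ((1 - x^2) / (1 - 2 * x^2))) by (field; split; nra).
  apply ln_Rinv. apply Rdiv_lt_0_compat; nra.
Qed.

Lemma Psi_fix_iff d x : 674/100 <= d <= 15/2 -> 3/8 <= x <= 1/2 ->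
  (Psi d x = x <-> x < 1/2 /\ Gk (d-1) x = 0).
Proof.
  intros Hd Hx. unfold Psi, Psi_dot, Rpower. rewrite lnPsihat by lra.
  assert (Lp : 0 < Lf (x^2)) by (apply Lf_pos; nra).
  replace ((d - 1) * - Lf (x^2)) with (- ((d-1) * Lf (x^2))) by ring.
  rewrite exp_Ropp.
  assert (Ep : 1 < exp ((d-1) * Lf (x^2))).
  { assert (H0 : exp 0 < exp ((d-1) * Lf (x^2))) by (apply exp_increasing; apply Rmult_lt_0_compat; lra).
    rewrite exp_0 in H0. exact H0. }
  set (E := exp ((d-1) * Lf (x^2))) in *.
  assert (Wp : 0 < / E) by (apply Rinv_0_lt_compat; lra).
  assert (Wl : / E < 1) by (rewrite <- Rinv_1; apply Rinv_lt_contravar; lra).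
  set (w := / E) in *.
  split.
  - intros H.
    assert (H1 : 1 - w = x * (2 - w)) by (rewrite <- H; field; lra).
    assert (Hx2 : x < 1/2).
    { destruct (Req_dec x (1/2)) as [->|]; [lra|lra]. }
    split; auto. unfold Gk.
    assert (Hw : w = (1 - 2 * x) / (1 - x)) by (field_simplify_eq; nra).
    assert (HE : E = (1 - x) / (1 - 2 * x)).
    { unfold w in Hw. rewrite <- (Rinv_inv E), Hw. field. lra. }
    assert (HL : exp (Lf x) = E).
    { unfold Lf. rewrite exp_ln. auto. apply ratio_pos; lra. }
    unfold E in HL. apply exp_inv in HL. lra.
  - intros [Hx2 HG]. unfold Gk in HG.
    assert (HE : E = (1 - x) / (1 - 2 * x)).
    { unfold E. replace ((d - 1) * Lf (x ^ 2)) with (Lf x) by lra.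
      unfold Lf. rewrite exp_ln. auto. apply ratio_pos; lra. }
    unfold w. rewrite HE. field. lra.
Qed.

Lemma xfix_spec d : 674/100 <= d <= 15/2 ->
  21/50 < xfix d < 49/100 /\ Gk (d-1) (xfix d) = 0.
Proof.
  intros Hd.
  destruct (G_root_exists (d-1)) as [x0 [Hx0 G0]]; [lra|].
  assert (HP : 3/8 <= x0 <= 1/2 /\ Psi d x0 = x0).
  { split; [lra|]. apply Psi_fix_iff; auto; lra. }
  assert (Hs := epsilon_spec (inhabits 0) (fun x => 3 / 8 <= x <= 1 / 2 /\ Psi d x = x) (ex_intro _ x0 HP)).
  fold (xfix d) in Hs. destruct Hs as [Hr Hf].
  apply Psi_fix_iff in Hf; auto. destruct Hf as [Hl HG].
  split; auto.
  assert (21/50 < xfix d < 49/100).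
  { apply (root_between (d-1)); try lra; auto.
    - apply G_neg_low; lra.
    - apply G_pos49; lra. }
  lra.
Qed.

Lemma star_674 : Phi_star (674/100) > 0.
Proof.
  destruct (xfix_spec (674/100)) as [Hr HG]; [lra|].
  assert (Hb : 446539/1000000 < xfix (674/100) < 22327/50000).
  { apply (root_between (674/100 - 1)); try lra.
    - unfold Gk. assert (H1 := al_ub). assert (H2 := al2_lb). lra.
    - unfold Gk. assert (H1 := ar_lb). assert (H2 := ar2_ub). lra. }
  unfold Phi_star, Phi3. set (x := xfix (674/100)) in *.
  replace (674/100 * (2/3 - /(674/100))) with (1048/300) by field.
  assert (ln (1 - x) <= ln (1 - (446539/1000000))) by (apply ln_le; lra).
  assert (ln (1 - 2 * x^3) <= ln (1 - 2 * (446539/1000000)^3)) by (apply ln_le; nra).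
  assert (ln (1 - (22327/50000)^2) <= ln (1 - x^2)) by (apply ln_le; nra).
  assert (K1 := pa1). assert (K2 := pa2). assert (K3 := pa3). lra.
Qed.

Lemma star_75 : Phi_star (15/2) < 0.
Proof.
  destruct (xfix_spec (15/2)) as [Hr HG]; [lra|].
  assert (Hb : 4693/10000 < xfix (15/2) < 2347/5000).
  { apply (root_between (15/2 - 1)); try lra.
    - unfold Gk. assert (H1 := bl_ub). assert (H2 := bl2_lb). lra.
    - unfold Gk. assert (H1 := br_lb). assert (H2 := br2_ub). lra. }
  unfold Phi_star, Phi3. set (x := xfix (15/2)) in *.
  replace (15/2 * (2/3 - /(15/2))) with 4 by field.
  assert (ln (1 - (2347/5000)) <= ln (1 - x)) by (apply ln_le; lra).
  assert (ln (1 - 2 * (2347/5000)^3) <= ln (1 - 2 * x^3)) by (apply ln_le; nra).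
  assert (ln (1 - x^2) <= ln (1 - (4693/10000)^2)) by (apply ln_le; nra).
  assert (K1 := pb1). assert (K2 := pb2). assert (K3 := pb3). lra.
Qed.

Definition Af x := - ln (1 - x) + ln (1 - 2 * x^3) - ln (1 - x^2).
Definition Bf x := - (2/3) * ln (1 - 2 * x^3) + ln (1 - x^2).

Lemma Phi3_AB d x : d <> 0 -> Phi3 d x = Af x + d * Bf x.
Proof. intros. unfold Phi3, Af, Bf. field. auto. Qed.

Definition Dom (y : R) : Prop := 674 / 100 <= y <= 15 / 2.

Lemma xfix_cont d0 : Dom d0 ->
  filterlim xfix (within Dom (locally d0)) (locally (xfix d0)).
Proof.
  intros Hd0. apply filterlim_locally. intros eps.
  destruct (xfix_spec d0 Hd0) as [Hr HG]. unfold Dom in Hd0.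
  set (x0 := xfix d0) in *. set (k0 := d0 - 1) in *.
  set (e := Rmin eps (Rmin (x0 - 21/50) (49/100 - x0)) / 2).
  assert (He : 0 < e /\ e < eps /\ 21/50 < x0 - e /\ x0 + e < 49/100).
  { assert (Hp := cond_pos eps).
    assert (H0 : 0 < Rmin eps (Rmin (x0 - 21/50) (49/100 - x0))).
    { apply Rmin_pos; [lra|apply Rmin_pos; lra]. }
    assert (H1 := Rmin_l eps (Rmin (x0 - 21/50) (49/100 - x0))).
    assert (H2 := Rmin_r eps (Rmin (x0 - 21/50) (49/100 - x0))).
    assert (H3 := Rmin_l (x0 - 21/50) (49/100 - x0)).
    assert (H4 := Rmin_r (x0 - 21/50) (49/100 - x0)).
    unfold e. lra. }
  set (a := x0 - e). set (b := x0 + e).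
  assert (Ga : Gk k0 a < 0).
  { rewrite <- HG. apply G_incr; unfold a, k0 in *; lra. }
  assert (Gb : 0 < Gk k0 b).
  { rewrite <- HG. apply G_incr; unfold b, k0 in *; lra. }
  assert (A : 0 < Lf (a^2)) by (apply Lf_pos; unfold a in *; nra).
  assert (B : 0 < Lf (b^2)) by (apply Lf_pos; unfold b in *; nra).
  set (da := - Gk k0 a / Lf (a^2)). set (db := Gk k0 b / Lf (b^2)).
  assert (Hda : 0 < da) by (apply Rdiv_lt_0_compat; lra).
  assert (Hdb : 0 < db) by (apply Rdiv_lt_0_compat; lra).
  assert (Hdel : 0 < Rmin da db) by (apply Rmin_pos; auto).
  exists (mkposreal _ Hdel). intros d Hball Hd.
  change (Rabs (d - d0) < Rmin da db) in Hball.
  apply Rabs_def2 in Hball.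
  assert (Hm1 := Rmin_l da db). assert (Hm2 := Rmin_r da db).
  assert (Ea : da * Lf (a^2) = - Gk k0 a) by (unfold da; field; lra).
  assert (Eb : db * Lf (b^2) = Gk k0 b) by (unfold db; field; lra).
  destruct (xfix_spec d Hd) as [Hr' HG'].
  assert (Hab : a < xfix d < b).
  { apply (root_between (d - 1)); unfold Dom in *; try lra; try exact HG'; try (unfold a, b; lra).
    - assert (Gk (d-1) a = Gk k0 a - (d - d0) * Lf (a^2)) by (unfold Gk, k0; ring).
      assert (Hq : - da * Lf (a^2) < (d - d0) * Lf (a^2)) by (apply Rmult_lt_compat_r; lra).
      replace (- da * Lf (a^2)) with (- (da * Lf (a^2))) in Hq by ring.
      lra.
    - assert (Gk (d-1) b = Gk k0 b - (d - d0) * Lf (b^2)) by (unfold Gk, k0; ring).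
      assert ((d - d0) * Lf (b^2) < db * Lf (b^2)) by (apply Rmult_lt_compat_r; lra).
      lra. }
  change (Rabs (xfix d - x0) < eps). apply Rabs_def1; unfold a, b in *; lra.
Qed.

Lemma AB_cont x : 0 < x < 1/2 -> continuous Af x /\ continuous Bf x.
Proof.
  intros Hx. split; apply (@ex_derive_continuous R_AbsRing R_NormedModule); unfold Af, Bf; auto_derive;
  repeat split; nra.
Qed.

Lemma Phi_star_cont d0 : Dom d0 ->
  filterlim Phi_star (within Dom (locally d0)) (locally (Phi_star d0)).
Proof.
  intros Hd0.
  destruct (xfix_spec d0 Hd0) as [Hr HG].
  destruct (AB_cont (xfix d0)) as [CA CB]; [lra|].
  apply (@filterlim_within_ext R R (locally d0) (locally (Phi_star d0)) _ Dom (fun d => Af (xfix d) + d * Bf (xfix d))).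
  - intros d Hd. unfold Phi_star. rewrite Phi3_AB; auto. unfold Dom in Hd. lra.
  - replace (Phi_star d0) with (Af (xfix d0) + d0 * Bf (xfix d0))
      by (unfold Phi_star; rewrite Phi3_AB; auto; unfold Dom in Hd0; lra).
    apply (filterlim_comp_2 (G := locally (Af (xfix d0))) (H := locally (d0 * Bf (xfix d0))) (fun d => Af (xfix d)) (fun d => d * Bf (xfix d)) Rplus).
    + apply filterlim_comp with (locally (xfix d0)). apply xfix_cont; auto. exact CA.
    + apply (filterlim_comp_2 (G := locally d0) (H := locally (Bf (xfix d0))) (fun d => d) (fun d => Bf (xfix d)) Rmult).
      * intros P HP. unfold filtermap, within. apply filter_imp with P; auto.
      * apply filterlim_comp with (locally (xfix d0)). apply xfix_cont; auto. exact CB.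
      * exact (@filterlim_mult R_AbsRing d0 (Bf (xfix d0))).
    + exact (@filterlim_plus R_AbsRing R_NormedModule (Af (xfix d0)) (d0 * Bf (xfix d0))).
Qed.

Theorem lemma4p2 :
  (forall d : R, 674 / 100 <= d <= 15 / 2 ->
     filterlim Phi_star
       (within (fun y => 674 / 100 <= y <= 15 / 2) (locally d))
       (locally (Phi_star d)))
  /\ Phi_star (674 / 100) > 0
  /\ Phi_star (15 / 2) < 0.
Proof.
  split; [|split].
  - intros d Hd. exact (Phi_star_cont d Hd).
  - exact star_674.
  - exact star_75.
Qed.
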